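(* Let $X$ be a compact metric space and $f: X \rightarrow X$ a continuous surjective map. Suppose there exist an infinite countable set $A=\{a_1,a_2,\dots\}\subset X$ and, for each $i\ge1$, a negative orbit $(x^i_{-n})_{n\ge 0}$ of $a_i$ (i.e. $x^i_0=a_i$ and $f(x^i_{-n-1})=x^i_{-n}$ for all $n\ge0$) such that: (i) the sets $L=\bigcup_{i\ge1}\big(\alpha((x^i_{-n})_{n\ge0},f)\cup\omega(a_i,f)\big)$ and $M=\bigcup_{i\ge1}\{x^i_{-n}: n\ge0\}$ are disjoint; (ii) for every pair $i\ne j$, $Orb((x^i_{-n})_{n\ge0},f)\cap Orb((x^j_{-n})_{n\ge0},f)=\emptyset$. Then $h(2^f)=\infty$.
   Context: $\alpha((x^i_{-n})_{n\ge0},f)$ is the set of accumulation points of the sequence $(x^i_{-n})$ as $n\to\infty$; $\omega(a_i,f)$ is the omega-limit set of $a_i$; $Orb((x^i_{-n})_{n\ge0},f)=\{x^i_{-n}:n\ge0\}\cup\{f^k(a_i):k\ge0\}$ is the full orbit through the given negative orbit. $2^X$ is the hyperspace of nonempty closed subsets with the Hausdorff metric, $2^f(B)=f(B)$, and $h$ is topological entropy. *)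

(* Defs.v *)
From HB Require Import structures.
From mathcomp Require Import all_boot all_order all_algebra.
From mathcomp Require Import all_classical all_reals all_analysis.
Set Implicit Arguments. Unset Strict Implicit. Unset Printing Implicit Defensive.
Import Order.TTheory GRing.Theory Num.Theory.
Import numFieldNormedType.Exports.
Local Open Scope classical_set_scope.
Local Open Scope ring_scope.

Section Defs.
Context {R : realType}.

Definition hyperspace (X : metricType R) : set (set X) :=
  [set B | B !=set0 /\ closed B].

Definition dist_pt_set (X : metricType R) (x : X) (B : set X) : R :=
  inf [set mdist x b | b in B].

Definition hausdorff_dist (X : metricType R) (A B : set X) : R :=
  Num.max (sup [set dist_pt_set a B | a in A])
          (sup [set dist_pt_set b A | b in B]).

Definition hyper_map (X : Type) (f : X -> X) (B : set X) : set X := f @` B.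

Definition separated_family (T : Type) (S : set T) (D : T -> T -> R)
    (g : T -> T) (n : nat) (eps : R) (m : nat) (e : 'I_m -> T) : Prop :=
  (forall i, S (e i)) /\
  (forall i j, i != j ->
     exists k : nat, (k < n)%N /\ eps < D (iter k g (e i)) (iter k g (e j))).

Definition sep_number (T : Type) (S : set T) (D : T -> T -> R)
    (g : T -> T) (n : nat) (eps : R) : \bar R :=
  ereal_sup [set (m%:R)%:E | m in
     [set m : nat | exists e : 'I_m -> T, separated_family S D g n eps e]].

Definition sep_rate (T : Type) (S : set T) (D : T -> T -> R)
    (g : T -> T) (eps : R) (n : nat) : \bar R :=
  match sep_number S D g n.+1 eps with
  | r%:E => (ln r / n.+1%:R)%:E
  | +oo%E => +oo%E
  | -oo%E => -oo%E
  end.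

Definition top_entropy (T : Type) (S : set T) (D : T -> T -> R)
    (g : T -> T) : \bar R :=
  ereal_sup [set limn_esup (sep_rate S D g eps) | eps in [set eps : R | 0 < eps]].

Definition hyper_entropy (X : metricType R) (f : X -> X) : \bar R :=
  top_entropy (@hyperspace X) (@hausdorff_dist X) (hyper_map f).

Definition acc_points (X : metricType R) (u : nat -> X) : set X :=
  cluster (u @ \oo).

Definition alpha_set (X : metricType R) (xneg : nat -> X) : set X :=
  acc_points xneg.

Definition omega_set (X : metricType R) (f : X -> X) (a : X) : set X :=
  acc_points (fun k => iter k f a).

Definition full_orbit (X : metricType R) (f : X -> X) (xneg : nat -> X) : set X :=
  range xneg `|` range (fun k => iter k f (xneg 0%N)).

End Defs.

(* Main.v *)
Require Import Defs.
From HB Require Import structures.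
From mathcomp Require Import all_boot all_order all_algebra.
From mathcomp Require Import all_classical all_reals all_analysis.
Import Order.TTheory GRing.Theory Num.Theory.
Import numFieldNormedType.Exports.
Local Open Scope classical_set_scope.
Local Open Scope ring_scope.



Lemma fin_min (R : realType) (P : nat -> R -> Prop) :
  (forall n d d', P n d -> 0 < d' -> d' <= d -> P n d') ->
  (forall n, exists2 d, 0 < d & P n d) ->
  forall N, exists2 d, 0 < d & forall n, (n < N)%N -> P n d.
Proof.
move=> Pdown hP; elim=> [|N [d1 d10 IH]]; first by exists 1.
have [d2 d20 h2] := hP N.
exists (Num.min d1 d2); first by rewrite lt_min d10 d20.
move=> n; rewrite ltnS leq_eqVlt => /orP[/eqP->|hn].
  by apply: Pdown h2 _ _; rewrite ?lt_min ?d10 ?d20 ?ge_min ?lexx ?orbT.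
by apply: Pdown (IH n hn) _ _; rewrite ?lt_min ?d10 ?d20 ?ge_min ?lexx.
Qed.

Lemma seq_sep (R : realType) (X : metricType R) (u : nat -> X) (p : X) :
  ~ cluster (u @ \oo) p ->
  exists2 d, 0 < d & forall n, u n <> p -> d <= mdist p (u n).
Proof.
move=> hc.
have [A [B [hA [hB hAB]]]] :
    exists A B, (u @ \oo) A /\ nbhs p B /\ ~ (A `&` B !=set0).
  apply: contrapT => H; apply: hc => A B hA hB; apply: contrapT => hn.
  by apply: H; exists A, B.
case: hA => N _ hN.
rewrite -metricType_numDomainType.filter_from_mdist_nbhs in hB.
case: hB => r r0 hr.
have [d1 d10 h1] := @fin_min R (fun n d => u n <> p -> d <= mdist p (u n))
  ltac:(by move=> n d d' h _ le /h; apply: le_trans)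
  ltac:(by move=> n; case: (pselect (u n = p)) => e;
       [exists 1 | exists (mdist p (u n)) => //; rewrite mdist_gt0; apply/eqP => e'; apply: e]) N.
exists (Num.min d1 r); first by rewrite lt_min d10 r0.
move=> n hn; case: (ltnP n N) => nN.
  by rewrite ge_min (h1 n nN hn).
rewrite ge_min; apply/orP; right; rewrite leNgt; apply/negP => lt.
by apply: hAB; exists (u n); split; [apply: hN | apply: hr].
Qed.

Section Orb.
Context (R : realType) (X : metricType R) (f : X -> X)
  (a : nat -> X) (x : nat -> nat -> X).
Hypothesis hx0 : forall i, x i 0%N = a i.
Hypothesis hxS : forall i n, f (x i n.+1) = x i n.
Hypothesis hL : (\bigcup_i (alpha_set (x i) `|` omega_set f (a i))) `&`
    (\bigcup_i range (x i)) = set0.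
Hypothesis hD : forall i j, i <> j -> full_orbit f (x i) `&` full_orbit f (x j) = set0.

Lemma iter_x i j m : (j <= m)%N -> iter j f (x i m) = x i (m - j).
Proof.
elim: j => [|j IH] hj; first by rewrite subn0.
rewrite iterS IH ?(ltnW hj) //.
have -> : (m - j = (m - j.+1).+1)%N by rewrite subnS prednK // subn_gt0.
by rewrite hxS.
Qed.

Lemma iter_x2 i j m : (m <= j)%N -> iter j f (x i m) = iter (j - m) f (a i).
Proof.
move=> hj; rewrite -{1}(subnK hj) iterD iter_x // subnn hx0 //.
Qed.

Lemma notL i y : (alpha_set (x i) y \/ omega_set f (a i) y) -> forall j n, y <> x j n.
Proof.
move=> hy j n e.
have : ((\bigcup_i (alpha_set (x i) `|` omega_set f (a i))) `&`
    (\bigcup_i range (x i))) y.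
  split; first by exists i.
  by exists j => //; exists n.
by rewrite hL.
Qed.

Lemma no_period i p : (0 < p)%N -> iter p f (a i) <> a i.
Proof.
move=> p0 hp.
have hq : forall q, iter (q * p) f (a i) = a i.
  elim=> [|q IH] //; by rewrite mulSn iterD IH hp.
apply: (@notL i (a i) _ i 0%N); last by rewrite hx0.
right => A B [N _ hA] hB.
exists (a i); split; last exact: nbhs_singleton.
rewrite -(hq N); apply: hA => /=.
by rewrite -{1}(muln1 N) leq_mul2l p0 orbT.
Qed.

Lemma orbit_mem i j m : full_orbit f (x i) (iter j f (x i m)).
Proof.
case: (leqP j m) => h.
  by rewrite iter_x //; left; exists (m - j)%N.
by rewrite iter_x2 ?(ltnW h) //; right; exists (j - m)%N => //; rewrite hx0.
Qed.

Lemma a_orbit i : full_orbit f (x i) (a i).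
Proof. by left; exists 0%N. Qed.

Lemma key i i' m j : iter j f (x i' m) = a i -> i' = i /\ m = j.
Proof.
move=> e.
have ii : i' = i.
  apply: contrapT => ne.
  have : (full_orbit f (x i') `&` full_orbit f (x i)) (a i).
    by split; [rewrite -e; exact: orbit_mem | exact: a_orbit].
  by rewrite hD.
subst i'; split => //.
case: (leqP j m) => h.
  move: e; rewrite iter_x // => e.
  case: (ltngtP m j) => [hmj|hmj|->] //.
    by move: h; rewrite leqNgt hmj.
  exfalso; apply: (@no_period i (m - j)%N); first by rewrite subn_gt0.
  by rewrite -{1}e iter_x // subnn hx0.
move: e; rewrite iter_x2 ?(ltnW h) // => e.
by exfalso; apply: (@no_period i (j - m)%N) => //; rewrite subn_gt0.
Qed.


Lemma delta_pair i i' : exists2 d, 0 < d &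
  forall y, full_orbit f (x i') y -> y <> a i -> d <= mdist (a i) y.
Proof.
have [d1 d10 h1] : exists2 d, 0 < d & forall n, x i' n <> a i -> d <= mdist (a i) (x i' n).
  apply: seq_sep => hc; apply: (@notL i' (a i) (or_introl hc) i 0%N); by rewrite hx0.
have [d2 d20 h2] : exists2 d, 0 < d & forall n, iter n f (a i') <> a i ->
    d <= mdist (a i) (iter n f (a i')).
  apply: (@seq_sep _ _ (fun n => iter n f (a i'))) => hc.
  apply: (@notL i' (a i) (or_intror hc) i 0%N); by rewrite hx0.
exists (Num.min d1 d2); first by rewrite lt_min d10 d20.
move=> y [[n _ <-]|[n _ <-]] ne; rewrite ge_min.
  by rewrite h1.
by rewrite hx0 in ne *; rewrite h2 ?orbT.
Qed.

Lemma delta_all N : exists2 d, 0 < d & forall i i', (i < N)%N -> (i' < N)%N ->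
  forall y, full_orbit f (x i') y -> y <> a i -> d <= mdist (a i) y.
Proof.
have [d d0 h] := @fin_min R (fun i d => forall i', (i' < N)%N ->
  forall y, full_orbit f (x i') y -> y <> a i -> d <= mdist (a i) y)
  ltac:(by move=> n d d' h _ le i' hi y hy ne; apply: le_trans le (h i' hi y hy ne))
  ltac:(move=> i; apply: (@fin_min R (fun i' d => 
     forall y, full_orbit f (x i') y -> y <> a i -> d <= mdist (a i) y));
     [by move=> n d d' h _ le y hy ne; apply: le_trans le (h y hy ne)
     | exact: delta_pair]) N.
by exists d => // i i' hi; apply: h.
Qed.


End Orb.


Section Hyp.
Context (R : realType) (X : metricType R) (f : X -> X)
  (a : nat -> X) (x : nat -> nat -> X).
Hypothesis hx0 : forall i, x i 0%N = a i.
Hypothesis hxS : forall i n, f (x i n.+1) = x i n.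
Hypothesis hL : (\bigcup_i (alpha_set (x i) `|` omega_set f (a i))) `&`
    (\bigcup_i range (x i)) = set0.
Hypothesis hD : forall i j, i <> j -> full_orbit f (x i) `&` full_orbit f (x j) = set0.

Let key' := @key R X f a x hx0 hxS hL hD.
Let orbit_mem' := @orbit_mem R X f a x hx0 hxS.
Let iter_x' := @iter_x R X f x hxS.

Definition Bset {N n : nat} (s : {ffun 'I_N * 'I_n.+1 -> bool}) : set X :=
  [set y | y = x 0%N n.+1 \/ exists p : 'I_N * 'I_n.+1, s p /\ y = x p.1 p.2].

Lemma iter_hyper k (B : set X) : iter k (hyper_map f) B = iter k f @` B.
Proof.
elim: k => [|k IH] /=; first by rewrite image_id.
rewrite IH /hyper_map; apply/seteqP; split => y /=.
  by case=> _ [z hz <-] <-; exists z.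
by case=> z hz <-; exists (iter k f z) => //; exists z.
Qed.

Lemma Bset_hyper {N n : nat} (s : {ffun 'I_N * 'I_n.+1 -> bool}) : hyperspace (Bset s).
Proof.
split; first by exists (x 0%N n.+1); left.
have hc := (proj1 (@accessible_finite_set_closed X)) (hausdorff_accessible (@metric_hausdorff R X)).
apply: hc.
apply: (@sub_finite_set _ _ ([set x 0%N n.+1] `|` range (fun p : 'I_N * 'I_n.+1 => x p.1 p.2))).
  by move=> y [->|[p [_ ->]]]; [left | right; exists p].
by rewrite finite_setU; split; [exact: finite_set1 | exact/finite_image/finite_finset].
Qed.

Lemma haus_sym (A B : set X) : hausdorff_dist A B = hausdorff_dist B A.
Proof. by rewrite /hausdorff_dist maxC. Qed.

Lemma one_side {N n : nat} d (hd : forall i i', (i < N)%N -> (i' < N)%N ->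
  forall y, full_orbit f (x i') y -> y <> a i -> d <= mdist (a i) y)
  (s s' : {ffun 'I_N * 'I_n.+1 -> bool}) p : s p -> ~~ s' p ->
  d <= hausdorff_dist (iter p.2 f @` Bset s) (iter p.2 f @` Bset s').
Proof.
move=> sp s'p.
set k := nat_of_ord p.2.
set B1 := iter k f @` Bset s; set B2 := iter k f @` Bset s'.
have hB2 : forall b, B2 b -> d <= mdist (a p.1) b.
  move=> b [z [->|[q [sq ->]]] <-].
    apply: (hd p.1 0%N) => //; first by apply: (leq_ltn_trans _ (ltn_ord p.1)).
    move=> /key' [_ e].
    by move: (ltn_ord p.2); rewrite -/k -e ltnn.
  apply: (hd p.1 q.1) => //.
  move=> /key' [e1 e2].
  have qp : q = p.
    move: e1 e2; rewrite /k; case: q {sq} => q1 q2; case: p {sp s'p k B1 B2} => p1 p2 /= e1 e2.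
    by congr pair; apply: val_inj.
  by move: s'p; rewrite -qp sq.
have B2ne : B2 !=set0 by exists (iter k f (x 0%N n.+1)); exists (x 0%N n.+1) => //; left.
have hdist : d <= dist_pt_set (a p.1) B2.
  apply: lb_le_inf; first by case: B2ne => b hb; exists (mdist (a p.1) b); exists b.
  by move=> _ [b hb <-]; apply: hB2.
have inB1 : B1 (a p.1).
  exists (x p.1 p.2); first by right; exists p.
  by rewrite iter_x' // subnn hx0.
set g := fun y => dist_pt_set (iter k f y) B2.
have ub : has_ubound [set dist_pt_set a0 B2 | a0 in B1].
  exists (Num.max (g (x 0%N n.+1)) (\big[Num.max/0]_(q : 'I_N * 'I_n.+1) g (x q.1 q.2))).
  move=> _ [_ [z [->|[q [_ ->]]] <-] <-]; rewrite le_max.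
    by rewrite lexx.
  apply/orP; right; exact: (le_bigmax 0 (fun q0 : 'I_N * 'I_n.+1 => g (x q0.1 q0.2)) q).
apply: (le_trans hdist); rewrite /hausdorff_dist le_max; apply/orP; left.
apply: ub_le_sup => //; by exists (a p.1).
Qed.



Lemma sep_fam N n d (d0 : 0 < d) (hd : forall i i', (i < N)%N -> (i' < N)%N ->
  forall y, full_orbit f (x i') y -> y <> a i -> d <= mdist (a i) y) :
  separated_family (@hyperspace R X) (@hausdorff_dist R X) (hyper_map f) n.+1 (d / 2)
    (fun k : 'I_#|{ffun 'I_N * 'I_n.+1 -> bool}| => Bset (enum_val k)).
Proof.
split; first by move=> i; exact: Bset_hyper.
move=> i j ij.
have : enum_val i != enum_val j by apply: contra ij => /eqP/enum_val_inj ->.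
move=> /eqP ne.
have [p hp] : exists p, enum_val i p != enum_val j p.
  apply: contrapT => H; apply: ne; apply/ffunP => p.
  by apply/eqP; apply: contrapT => H'; apply: H; exists p; apply/negP.
exists (nat_of_ord p.2); split; first exact: ltn_ord.
rewrite !iter_hyper.
have hlt : d / 2 < d by rewrite ltr_pdivrMr // ltr_pMr // ltr1n.
case si: (enum_val i p) hp => hp.
  apply: (lt_le_trans hlt); apply: (one_side _ hd) => //.
rewrite haus_sym; apply: (lt_le_trans hlt); apply: (one_side _ hd) => //.
  by move: hp; case: (enum_val j p).
by rewrite si.
Qed.

Lemma limn_esup_ge (u : (\bar R)^nat) l : (forall n, l <= u n)%E -> (l <= limn_esup u)%E.
Proof.
move=> h; rewrite limn_esup_lim; apply: lime_ge; first exact: is_cvg_esups.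
apply: nearW => n; apply: le_trans (h n) _; apply: ereal_sup_ubound; exists n => //=.
Qed.

Lemma entropy_ge N : ((N%:R * ln 2)%:E <= hyper_entropy f)%E.
Proof.
have [d d0 hd] := @delta_all R X f a x hx0 hL N.
apply: (@le_trans _ _ (limn_esup (sep_rate (@hyperspace R X) (@hausdorff_dist R X) (hyper_map f) (d / 2)))); last first.
  apply: ereal_sup_ubound; exists (d / 2) => //; exact: divr_gt0.
apply: limn_esup_ge => n.
set m := #|{ffun 'I_N * 'I_n.+1 -> bool}|.
have hm : ((m%:R)%:E <= sep_number (@hyperspace R X) (@hausdorff_dist R X) (hyper_map f) n.+1 (d / 2))%E.
  apply: ereal_sup_ubound; exists m => //.
  by exists (fun k : 'I_m => Bset (enum_val k)); apply: sep_fam.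
have m0 : (0 < m%:R :> R).
  by rewrite ltr0n /m card_ffun card_bool expn_gt0.
have lnm : ln (m%:R : R) / n.+1%:R = N%:R * ln 2.
  rewrite /m card_ffun card_bool card_prod !card_ord natrX lnXn //.
  rewrite -[ln 2 *+ _]mulr_natr natrM mulrA -mulrA divff ?pnatr_eq0 // mulr1.
  by rewrite mulrC.
rewrite /sep_rate; move: hm; case: sep_number => [r||] hm //.
  rewrite lee_fin -lnm ler_pM2r ?invr_gt0 ?ltr0n // ler_ln ?posrE //.
  by rewrite lee_fin in hm; apply: lt_le_trans m0 hm.
by rewrite leey.
Qed.

End Hyp.

Theorem theorem5p11 (R : realType) (X : metricType R) (f : X -> X)
  (a : nat -> X) (x : nat -> nat -> X) :
  compact [set: X] ->
  continuous f ->
  (forall y : X, exists z : X, f z = y) ->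
  injective a ->
  (forall i, x i 0%N = a i) ->
  (forall i n, f (x i n.+1) = x i n) ->
  (\bigcup_i (alpha_set (x i) `|` omega_set f (a i))) `&`
    (\bigcup_i range (x i)) = set0 ->
  (forall i j, i <> j -> full_orbit f (x i) `&` full_orbit f (x j) = set0) ->
  hyper_entropy f = +oo%E.
Proof.
move=> _ _ _ _ hx0 hxS hL hD.
have H := @entropy_ge R X f a x hx0 hxS hL hD.
have l20 : 0 < ln (2 : R) by apply: ln_gt0; rewrite ltr1n.
case E: (hyper_entropy f) H => [r||] H //.
  exfalso; have := H (Num.truncn (r / ln 2)).+1; rewrite lee_fin.
  apply/negP; rewrite -ltNge -ltr_pdivrMr //; exact: (truncnS_gt (r / ln 2)).
by have := H 0%N; rewrite leeNy_eq.
Qed.
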